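(* Let $f\in K$ have degree $n$. Then $f$ is quasi-symmetric if and only if $A_{\mathbf a^{(k)}}f=f$ for all $1\le k\le n$.
   Context: $K$ is the ring of integer formal power series of bounded degree in $x_1,x_2,\dots$. $f$ is quasi-symmetric if the coefficient of $x_{i_1}^{a_1}\cdots x_{i_k}^{a_k}$ equals that of $x_{j_1}^{a_1}\cdots x_{j_k}^{a_k}$ whenever $i_1<\dots<i_k$ and $j_1<\dots<j_k$. For a strictly increasing sequence $\mathbf a=(1\le a_1<a_2<\cdots)$ of positive integers, $A_{\mathbf a}:K\to K$ is the algebra homomorphism $A_{\mathbf a}f=f(0,\dots,0,x_1,0,\dots,0,x_2,0,\dots)$ with $x_i$ placed in position $a_i$ (i.e. substitute $x_{a_i}\mapsto x_i$ and all other variables $\mapsto0$). For an integer $k\ge1$, $\mathbf a^{(k)}$ is the sequence with $a^{(k)}(i)=i$ for $i<k$ and $a^{(k)}(i)=i+1$ for $i\ge k$. *)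

(* Defs.v *)
From mathcomp Require Import all_boot all_order all_algebra.
Set Implicit Arguments. Unset Strict Implicit. Unset Printing Implicit Defensive.
Import GRing.Theory Num.Theory.

(* Variables are x_1, x_2, ... (1-based).  An exponent vector is a function
   e : nat -> nat; e i is the exponent of x_i.  A genuine monomial has
   e 0 = 0 (there is no x_0) and finite support. *)
Definition expo := nat -> nat.

Definition is_monomial (e : expo) : Prop :=
  e 0%N = 0%N /\ exists N : nat, forall i, (N < i)%N -> e i = 0%N.

Definition mdeg_le (e : expo) (d : nat) : Prop :=
  forall N : nat, (\sum_(i < N) e i <= d)%N.

Definition mdeg_eq (e : expo) (d : nat) : Prop :=
  mdeg_le e d /\ exists N : nat, (\sum_(i < N) e i)%N = d.

Definition series := expo -> int.

Definition in_K (f : series) : Prop :=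
  (forall e, ~ is_monomial e -> f e = 0%R) /\
  exists d : nat, forall e, f e <> 0%R -> mdeg_le e d.

Definition has_degree (f : series) (n : nat) : Prop :=
  (forall e, f e <> 0%R -> mdeg_le e n) /\
  ((exists e, f e <> 0%R) -> exists e, f e <> 0%R /\ mdeg_eq e n).

Definition incr_upto (k : nat) (i : nat -> nat) : Prop :=
  (0 < k -> 1 <= i 1%N)%N /\ forall l, (1 <= l)%N -> (l < k)%N -> (i l < i l.+1)%N.

(* exponent vector of x_{i_1}^{c_1} ... x_{i_k}^{c_k} *)
Definition mono_of (k : nat) (i c : nat -> nat) : expo :=
  fun p => (\sum_(1 <= l < k.+1 | i l == p) c l)%N.

Definition quasi_symmetric (f : series) : Prop :=
  forall (k : nat) (c i j : nat -> nat),
    incr_upto k i -> incr_upto k j -> f (mono_of k i c) = f (mono_of k j c).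

Definition incr_seq (a : nat -> nat) : Prop :=
  (1 <= a 1%N)%N /\ forall l, (1 <= l)%N -> (a l < a l.+1)%N.

(* Preimage of an exponent vector m under x_{a_i} |-> x_i (other variables
   |-> 0): the coefficient of x^m in A_a f is the coefficient in f of x^e with
   e (a_i) = m i and e zero off the range of a.  (Position 0 is copied so that
   non-monomials are sent to non-monomials.) *)
Definition push (a : nat -> nat) (m : expo) : expo :=
  fun j => if j == 0%N then m 0%N
           else (\sum_(1 <= i < j.+1 | a i == j) m i)%N.

Definition A_op (a : nat -> nat) (f : series) : series :=
  fun m => f (push a m).

Definition a_k (k : nat) : nat -> nat :=
  fun i => if (i < k)%N then i else i.+1.

(* Main.v *)
Require Import Defs.
From mathcomp Require Import all_boot all_order all_algebra.
From mathcomp Require Import zify.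
From Stdlib Require Import FunctionalExtensionality Classical.
Set Implicit Arguments. Unset Strict Implicit.

Lemma sum_ak k lo hi p (F : nat -> nat) :
  (\sum_(lo <= l < hi | a_k k l == p) F l =
   if p < k then (if lo <= p < hi then F p else 0)
   else if p == k then 0 else (if lo <= p.-1 < hi then F p.-1 else 0))%N.
Proof.
case: ltnP => Hpk.
  rewrite -[RHS](big_nat1_eq addn); apply: eq_bigl => l; rewrite /a_k.
  case: ltnP => Hl; apply/eqP/eqP; lia.
case: eqP => Hpk2.
  rewrite big_pred0 // => l; rewrite /a_k; case: ltnP => Hl; apply/eqP; lia.
rewrite -[RHS](big_nat1_eq addn); apply: eq_bigl => l; rewrite /a_k.
case: ltnP => Hl; apply/eqP/eqP; lia.
Qed.

Lemma sum_eq1 lo hi q (x : nat) :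
  (\sum_(lo <= p < hi) (if q == p then x else 0) = if lo <= q < hi then x else 0)%N.
Proof.
rewrite -big_mkcond /=. under eq_bigl => p do rewrite eq_sym.
by rewrite big_nat1_eq.
Qed.

Lemma incr_shift K i : incr_upto K i ->
  forall a d, 1 <= a -> a + d <= K -> i a + d <= i (a + d).
Proof.
move=> [H1 H2] a; elim=> [|d IH] Ha Had; first by rewrite !addn0.
have Had' : a + d <= K by lia.
have := IH Ha Had'. have := H2 (a + d). rewrite !addnS. lia.
Qed.

Lemma incr_ge K i : incr_upto K i -> forall l, 1 <= l <= K -> l <= i l.
Proof.
move=> Hi l /andP[H1 H2]. have := @incr_shift K i Hi 1 (l - 1) (leqnn 1).
have E : 1 + (l - 1) = l by lia. rewrite E => /(_ H2).
have := (proj1 Hi). lia.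
Qed.

Lemma incr_lt K i : incr_upto K i -> forall a b, 1 <= a -> a < b -> b <= K -> i a < i b.
Proof.
move=> Hi a b Ha Hab HbK. have := @incr_shift K i Hi a (b - a) Ha.
have E : a + (b - a) = b by lia. rewrite E => /(_ HbK). lia.
Qed.

Lemma incr_le K i : incr_upto K i -> forall a b, 1 <= a -> a <= b -> b <= K -> i a <= i b.
Proof.
move=> Hi a b Ha Hab HbK. case: (ltngtP a b) Hab => // [Hlt _|<- _ //].
exact: ltnW (@incr_lt K i Hi a b Ha Hlt HbK).
Qed.

Lemma push_ak k m p : 1 <= k -> push (a_k k) m p =
  if p == 0 then m 0 else if p < k then m p else if p == k then 0 else m p.-1.
Proof.
move=> Hk; rewrite /push; case: eqP => // Hp; rewrite sum_ak.
case: ltnP => H1; first by have -> : (1 <= p < p.+1) by lia.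
case: eqP => // H2. by have -> : (1 <= p.-1 < p.+1) by lia.
Qed.

Lemma sum_remove K l0 (F : nat -> nat) : 1 <= l0 <= K.+1 -> F l0 = 0 ->
  (\sum_(1 <= l < K.+2) F l = \sum_(1 <= l < K.+1) F (a_k l0 l))%N.
Proof.
move=> Hl0 HF; elim: K Hl0 => [|K IH] Hl0.
  have E : l0 = 1 by lia. by rewrite big_nat1 big_geq // -E HF.
case: (ltnP l0 K.+2) => H.
  rewrite big_nat_recr // IH; last by lia.
  rewrite [RHS]big_nat_recr //=; congr (_ + _); by rewrite /a_k ltnNge -ltnS H.
have E : l0 = K.+2 by lia.
rewrite big_nat_recr // -E HF /= addn0; apply: eq_big_nat => l Hl.
by rewrite /a_k; have -> : l < l0 by lia.
Qed.

Lemma mono_remove K l0 i c : 1 <= l0 <= K.+1 -> c l0 = 0 ->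
  mono_of K.+1 i c = mono_of K (fun l => i (a_k l0 l)) (fun l => c (a_k l0 l)).
Proof.
move=> Hl0 Hc; apply: functional_extensionality => p; rewrite /mono_of big_mkcond [RHS]big_mkcond /=.
apply: (@sum_remove K l0 (fun l => if i l == p then c l else 0)) => //.
by rewrite Hc; case: ifP.
Qed.

Lemma incr_remove K l0 i : incr_upto K.+1 i -> 1 <= l0 <= K.+1 ->
  incr_upto K (fun l => i (a_k l0 l)).
Proof.
move=> Hi Hl0; have [H1 H2] := Hi; split.
  move=> HK; rewrite /a_k; case: ifP => _; first by apply: H1.
  have := H2 1 (leqnn 1); have := H1 isT; lia.
move=> l Hl HlK; rewrite /a_k.
case: (ltnP l l0) => Hll0; case: (ltnP l.+1 l0) => Hll1.
- by apply: H2; lia.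
- have E : l.+1 = l0 by lia.
  have h1 : i l < i l.+1 by apply: H2; lia.
  have h2 : i l.+1 < i l.+2 by apply: H2; lia.
  lia.
- lia.
- by apply: H2; lia.
Qed.

Lemma zero_removal K i j c : incr_upto K i -> incr_upto K j ->
  exists K' i' j' c', [/\ incr_upto K' i', incr_upto K' j',
    (forall l, 1 <= l <= K' -> 0 < c' l),
    mono_of K i c = mono_of K' i' c' & mono_of K j c = mono_of K' j' c'].
Proof.
elim: K i j c => [|K IH] i j c Hi Hj.
  by exists 0, i, j, c; split => // l; lia.
case: (boolP (has (fun l => c l == 0) (iota 1 K.+1))).
  move=> /hasP [l0]; rewrite mem_iota => Hl0 /eqP Hc.
  have Hl0' : 1 <= l0 <= K.+1 by lia.
  have [K' [i' [j' [c' [A B C D E]]]]] :=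
    IH _ _ (fun l => c (a_k l0 l)) (incr_remove Hi Hl0') (incr_remove Hj Hl0').
  exists K', i', j', c'; split => //.
    by rewrite (mono_remove i Hl0' Hc).
  by rewrite (mono_remove j Hl0' Hc).
move=> /hasPn Hall; exists K.+1, i, j, c; split => // l Hl.
have : l \in iota 1 K.+1 by rewrite mem_iota; lia.
move=> /Hall; lia.
Qed.

Lemma leq_sum_range lo hi (E1 E2 : nat -> nat) :
  (forall l, lo <= l < hi -> E1 l <= E2 l) ->
  (\sum_(lo <= l < hi) E1 l <= \sum_(lo <= l < hi) E2 l)%N.
Proof.
move=> H; rewrite big_nat_cond [X in _ <= X]big_nat_cond.
by apply: leq_sum => l /andP[Hl _]; apply: H.
Qed.

Lemma deg_mono K i c n : incr_upto K i -> mdeg_le (mono_of K i c) n ->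
  (\sum_(1 <= l < K.+1) c l <= n)%N.
Proof.
move=> Hi Hm; have := Hm (i K).+1; rewrite -(big_mkord (fun _ => true) (fun p => mono_of K i c p)) /mono_of.
under eq_bigr => p _ do rewrite big_mkcond.
rewrite exchange_big_nat /=.
rewrite (@eq_big_nat _ _ _ 1 K.+1 _ (fun l => c l)) // => l Hl.
rewrite sum_eq1. have -> // : 0 <= i l < (i K).+1.
have := @incr_le K i Hi l K; lia.
Qed.

Lemma mono_eq K i j c p q : (forall l, 1 <= l <= K -> (i l == p) = (j l == q)) ->
  mono_of K i c p = mono_of K j c q.
Proof.
move=> E; rewrite /mono_of big_mkcond [RHS]big_mkcond /=.
apply: eq_big_nat => l Hl; rewrite E //; lia.
Qed.

Lemma mono_zero K i c p : (forall l, 1 <= l <= K -> i l != p) -> mono_of K i c p = 0.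
Proof.
move=> E; rewrite /mono_of big_mkcond /=.
rewrite (@eq_big_nat _ _ _ 1 K.+1 _ (fun _ => 0)) ?sum_nat_const_nat ?muln0 // => l Hl.
rewrite ifN //; apply: E; lia.
Qed.

Lemma main_M (f : series) n K i c :
  (forall e, f e <> 0%R -> mdeg_le e n) ->
  (forall k m, 1 <= k <= n -> f (push (a_k k) m) = f m) ->
  incr_upto K i -> (forall l, 1 <= l <= K -> 0 < c l) ->
  f (mono_of K i c) = f (mono_of K (fun l => l) c).
Proof.
move=> Hdeg H Hi Hc.
have Hid : incr_upto K (fun l => l) by split => // l _ _.
case: (leqP (\sum_(1 <= l < K.+1) c l) n) => HS; last first.
  have Z : forall i', incr_upto K i' -> f (mono_of K i' c) = 0%R.
    move=> i' Hi'; apply: NNPP => Hne. have := deg_mono Hi' (Hdeg _ Hne). lia.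
  by rewrite !Z.
have HK : K <= n.
  have : (\sum_(1 <= l < K.+1) 1 <= \sum_(1 <= l < K.+1) c l)%N.
    by apply: leq_sum_range => l Hl; apply: Hc; lia.
  rewrite sum_nat_const_nat; lia.
suff : forall T i', incr_upto K i' -> \sum_(1 <= l < K.+1) i' l = T ->
   f (mono_of K i' c) = f (mono_of K (fun l => l) c).
  by move=> /(_ _ i Hi erefl).
elim/ltn_ind => T IH i' Hi' HT.
case: (boolP (has (fun l => i' l != l) (iota 1 K))); last first.
  move=> /hasPn Hall; congr f; apply: functional_extensionality => p.
  apply: mono_eq => l Hl.
  have : l \in iota 1 K by rewrite mem_iota; lia.
  by move=> /Hall /negPn /eqP ->.
move=> Hex.
have exP : exists l, (1 <= l <= K) && (i' l != l).
  move/hasP: Hex => [l]; rewrite mem_iota => Hl Hne; exists l.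
  rewrite Hne andbT; lia.
case: (ex_minnP exP) => g /andP[Hg Hig] Hmin.
have Hlow : forall l, 1 <= l < g -> i' l = l.
  move=> l Hl; apply/eqP; apply: contraT => Hne.
  have := Hmin l; rewrite Hne andbT; have -> : 1 <= l <= K by lia.
  move=> /(_ isT); lia.
have Hgg : g < i' g.
  have := @incr_ge K i' Hi' g Hg; move: Hig => /eqP; lia.
pose i2 := fun l => if l < g then l else (i' l).-1.
have Fact : forall l, 1 <= l <= K ->
   (l < g /\ i' l = l /\ i2 l = l) \/ (g <= l /\ g < i' l /\ i2 l = (i' l).-1).
  move=> l Hl; rewrite /i2; case: ltnP => Hlg.
    by left; split => //; split => //; apply: Hlow; lia.
  right; split => //; split => //.
  have := @incr_le K i' Hi' g l; lia.
have Hi2 : incr_upto K i2.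
  split.
    move=> HK0; have := Fact 1; have -> : 1 <= 1 <= K by lia.
    move=> /(_ isT); lia.
  move=> l Hl HlK.
  have := Fact l; have -> : 1 <= l <= K by lia.
  have := Fact l.+1; have -> : 1 <= l.+1 <= K by lia.
  have := (proj2 Hi') l Hl HlK.
  move=> h0 /(_ isT) h1 /(_ isT) h2; lia.
have Hsum : \sum_(1 <= l < K.+1) i2 l < T.
  rewrite -HT.
  have : (\sum_(1 <= l < K.+1) (i2 l + (if g == l then 1 else 0)) <=
          \sum_(1 <= l < K.+1) i' l)%N.
    apply: leq_sum_range => l Hl.
    have := Fact l; have -> : 1 <= l <= K by lia.
    move=> /(_ isT); case: eqP => Hgl; lia.
  rewrite big_split /= sum_eq1.
  have -> : 1 <= g < K.+1 by lia.
  lia.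
have Hpush : mono_of K i' c = push (a_k g) (mono_of K i2 c).
  apply: functional_extensionality => p.
  have Hg1 : 1 <= g by lia.
  rewrite (push_ak _ _ Hg1).
  case: eqP => Hp0.
    rewrite Hp0; apply: mono_eq => l Hl.
    have := Fact l Hl => h.
    apply/idP/idP => /eqP ?; apply/eqP; lia.
  case: ltnP => Hpg.
    apply: mono_eq => l Hl.
    have := Fact l Hl => h.
    apply/idP/idP => /eqP ?; apply/eqP; lia.
  case: eqP => Hpg2.
    apply: mono_zero => l Hl.
    have := Fact l Hl => h.
    apply/eqP; lia.
  apply: mono_eq => l Hl.
  have := Fact l Hl => h.
  apply/idP/idP => /eqP ?; apply/eqP; lia.
rewrite Hpush H; last by lia.
exact: (IH _ Hsum i2 Hi2 erefl).
Qed.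

Theorem lemma8p3 (f : series) (n : nat) :
  in_K f -> has_degree f n ->
  (quasi_symmetric f <->
   (forall k : nat, (1 <= k)%N -> (k <= n)%N -> A_op (a_k k) f = f)).
Proof.
move=> [HK1 _] [Hdeg _]; split.
- move=> HQ k Hk1 Hkn; apply: functional_extensionality => m; rewrite /A_op.
  case: (classic (is_monomial m)) => Hm.
  + case: Hm => [Hm0 [N HN]].
    have Hid : incr_upto N (fun l => l) by split => // l _ _.
    have Hak : incr_upto N (a_k k).
      split; first by rewrite /a_k; case: ifP.
      by move=> l _ _; rewrite /a_k; case: (ltnP l k) => h1; case: (ltnP l.+1 k) => h2; lia.
    have := HQ N m (fun l => l) (a_k k) Hid Hak.
    have E1 : mono_of N (fun l => l) m = m.
      apply: functional_extensionality => p; rewrite /mono_of (big_nat1_eq addn).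
      case: ifP => h //. case: (posnP p) => [->|hp]; first by rewrite Hm0.
      by rewrite HN //; lia.
    have E2 : mono_of N (a_k k) m = push (a_k k) m.
      apply: functional_extensionality => p; rewrite push_ak // /mono_of sum_ak.
      case: (posnP p) => [->|hp0]; first by rewrite /= Hk1 Hm0.
      case: (ltngtP p k) => h.
      - case: ifP => // h2; rewrite HN //; lia.
      - try have -> : (p < k) = false by apply/negbTE; lia.
        try have -> : (p == k) = false by apply/eqP; lia.
        case: ifP => // h3; rewrite HN //; lia.
      - by subst p; rewrite ?ltnn ?eqxx.
    by rewrite E1 E2 => ->.
  + rewrite (HK1 m Hm) HK1 //.
    move=> [H0 [N HN]]; apply: Hm; split.
      by move: H0; rewrite push_ak.
    exists N => p Hp; case: (ltnP p k) => hpk.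
      have := HN p Hp; rewrite push_ak //.
      have -> : (p == 0) = false by apply/eqP; lia.
      by rewrite hpk.
    have := HN p.+1 (leq_trans Hp (leqnSn _)) ; rewrite push_ak //.
    have -> : (p.+1 == 0) = false by [].
    have -> : (p.+1 < k) = false by apply/negbTE; lia.
    have -> : (p.+1 == k) = false by apply/eqP; lia.
    by [].
- move=> H K c i j Hi Hj.
  have [K' [i' [j' [c' [A B C D E]]]]] := @zero_removal K i j c Hi Hj.
  have H' : forall k m, 1 <= k <= n -> f (push (a_k k) m) = f m.
    move=> k m /andP[h1 h2]; have := H k h1 h2.
    by move/(congr1 (fun g => g m)).
  rewrite D E (main_M Hdeg H' A C) (main_M Hdeg H' B C) //.
Qed.
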